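(* For every first-order formula $\phi(x_1,\dots,x_k)$ in the language $\{+,\times\}$ of arithmetic there is a first-order formula $\psi_\phi(x_1,\dots,x_k)$ in the language $\{\le,[1]+[1]\}$ such that for all $n_1,\dots,n_k\in\mathbb N$, $$\langle\mathbb N,+,\times\rangle\models\phi(n_1,\dots,n_k)\iff \mathbf Y^*\models\psi_\phi([n_1],\dots,[n_k]).$$
   Context: $\mathbb N$ is the set of non-negative integers with the usual addition and multiplication. $\mathcal P$ is the set of all integer partitions, including the empty partition $\emptyset$; a partition is a nonincreasing finite sequence of positive integers. $[n]$ denotes the partition with a single part $n$, with the convention $[0]=\emptyset$. Young's lattice $\mathbf Y=\langle\mathcal P,\le\rangle$ has $(s_1,\dots,s_r)\le(n_1,\dots,n_t)$ iff $r\le t$ and $s_i\le n_i$ for all $i\le r$; $\mathbf Y^*$ is $\mathbf Y$ with a constant symbol interpreted as the partition $[1]+[1]=(1,1)$. *)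

(* Defs.v *)
From mathcomp Require Import all_boot.
Set Implicit Arguments. Unset Strict Implicit. Unset Printing Implicit Defensive.

Definition is_partition (s : seq nat) : bool :=
  sorted geq s && all (fun x => 0 < x) s.

Record partition := Partition { pval : seq nat; pvalP : is_partition pval }.

Definition young_le (s n : partition) : Prop :=
  size (pval s) <= size (pval n) /\
  forall i, i < size (pval s) -> nth 0 (pval s) i <= nth 0 (pval n) i.

(* [n] : the one-part partition, [0] = empty partition *)
Definition single_seq (n : nat) : seq nat := if n is 0 then [::] else [:: n].
Lemma single_seqP n : is_partition (single_seq n).
Proof. by case: n. Qed.
Definition single (n : nat) : partition := Partition (single_seqP n).

(* the constant [1]+[1] = (1,1) *)
Lemma one_one_P : is_partition [:: 1; 1]. Proof. by []. Qed.
Definition one_one : partition := Partition one_one_P.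

Inductive aterm : Type :=
| AVar : nat -> aterm
| AAdd : aterm -> aterm -> aterm
| AMul : aterm -> aterm -> aterm.

Inductive aform : Type :=
| AEq : aterm -> aterm -> aform
| ANot : aform -> aform
| AAnd : aform -> aform -> aform
| AOr : aform -> aform -> aform
| AEx : nat -> aform -> aform
| AAll : nat -> aform -> aform.

Definition upd {D : Type} (v : nat -> D) (i : nat) (d : D) : nat -> D :=
  fun j => if j == i then d else v j.

Fixpoint aterm_eval (v : nat -> nat) (t : aterm) : nat :=
  match t with
  | AVar i => v i
  | AAdd a b => aterm_eval v a + aterm_eval v b
  | AMul a b => aterm_eval v a * aterm_eval v b
  end.

Fixpoint aform_sat (v : nat -> nat) (f : aform) : Prop :=
  match f with
  | AEq a b => aterm_eval v a = aterm_eval v b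
  | ANot g => ~ aform_sat v g
  | AAnd g h => aform_sat v g /\ aform_sat v h
  | AOr g h => aform_sat v g \/ aform_sat v h
  | AEx i g => exists n : nat, aform_sat (upd v i n) g
  | AAll i g => forall n : nat, aform_sat (upd v i n) g
  end.

Fixpoint aterm_fv (t : aterm) : seq nat :=
  match t with
  | AVar i => [:: i]
  | AAdd a b | AMul a b => aterm_fv a ++ aterm_fv b
  end.

Fixpoint aform_fv (f : aform) : seq nat :=
  match f with
  | AEq a b => aterm_fv a ++ aterm_fv b
  | ANot g => aform_fv g
  | AAnd g h | AOr g h => aform_fv g ++ aform_fv h
  | AEx i g | AAll i g => filter (fun j => j != i) (aform_fv g)
  end.

Inductive yterm : Type :=
| YVar : nat -> yterm
| YConst : yterm.

Inductive yform : Type :=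
| YEq : yterm -> yterm -> yform
| YLe : yterm -> yterm -> yform
| YNot : yform -> yform
| YAnd : yform -> yform -> yform
| YOr : yform -> yform -> yform
| YEx : nat -> yform -> yform
| YAll : nat -> yform -> yform.

Definition yterm_eval (v : nat -> partition) (t : yterm) : partition :=
  match t with
  | YVar i => v i
  | YConst => one_one
  end.

Fixpoint yform_sat (v : nat -> partition) (f : yform) : Prop :=
  match f with
  | YEq a b => yterm_eval v a = yterm_eval v b
  | YLe a b => young_le (yterm_eval v a) (yterm_eval v b)
  | YNot g => ~ yform_sat v g
  | YAnd g h => yform_sat v g /\ yform_sat v h
  | YOr g h => yform_sat v g \/ yform_sat v h
  | YEx i g => exists p : partition, yform_sat (upd v i p) g
  | YAll i g => forall p : partition, yform_sat (upd v i p) g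
  end.

Definition yterm_fv (t : yterm) : seq nat :=
  match t with
  | YVar i => [:: i]
  | YConst => [::]
  end.

Fixpoint yform_fv (f : yform) : seq nat :=
  match f with
  | YEq a b | YLe a b => yterm_fv a ++ yterm_fv b
  | YNot g => yform_fv g
  | YAnd g h | YOr g h => yform_fv g ++ yform_fv h
  | YEx i g | YAll i g => filter (fun j => j != i) (yform_fv g)
  end.

(* Main.v *)
Require Import Defs.
From mathcomp Require Import all_boot zify.
From Stdlib Require Import Classical Setoid Morphisms.
Set Implicit Arguments. Unset Strict Implicit.
Notation part := Defs.partition.
Notation sat := yform_sat.


Definition rw (p : part) j := nth 0 (pval p) j.
Definition sz (p : part) := size (pval p).

Lemma rw_pos p j : (0 < rw p j) = (j < sz p).
Proof.
rewrite /rw /sz; case: p => s /= /andP [_ /allP H].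
case: (ltnP j (size s)) => hj; last by rewrite nth_default.
by apply: H; rewrite mem_nth.
Qed.

Lemma rw_mono p i j : i <= j -> rw p j <= rw p i.
Proof.
move=> hij; case: (ltnP j (sz p)) => hj; last first.
  by rewrite /rw nth_default.
rewrite /rw; case: p hj => s Hp hj; have /andP [Hs _] := Hp.
rewrite /sz /= in hj.
apply: (sorted_leq_nth (leT:=geq)) => //.
- by move=> x y z /= h1 h2; apply: leq_trans h2 h1.
- by move=> x /=.
- rewrite inE; exact: leq_ltn_trans hij hj.
Qed.

Lemma le_rw p q : young_le p q <-> forall j, rw p j <= rw q j.
Proof.
split.
- case=> Hs H j; case: (ltnP j (sz p)) => hj; first exact: H.
  by rewrite /rw nth_default.
- move=> H; split; last by move=> i _; apply: H.
  rewrite -/(sz p) -/(sz q) leqNgt; apply/negP => hlt.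
  have h1 := H (sz q); have h2 := rw_pos q (sz q); have h3 := rw_pos p (sz q).
  rewrite ltnn in h2; rewrite hlt in h3; lia.
Qed.

Lemma part_eq p q : p = q <-> forall j, rw p j = rw q j.
Proof.
split; first by move=> ->.
move=> H; case: p q H => s Hs [t Ht] /= H.
have sz_eq : size s = size t.
  apply/eqP; rewrite eqn_leq; apply/andP; split; rewrite leqNgt; apply/negP => hlt.
  - have h1 := rw_pos (Partition Hs) (size t); have h2 := H (size t).
    rewrite /rw /sz /= in h1 h2; rewrite hlt h2 nth_default in h1 => //.
  - have h1 := rw_pos (Partition Ht) (size s); have h2 := H (size s).
    rewrite /rw /sz /= in h1 h2; rewrite hlt -h2 nth_default in h1 => //.
have est : s = t by apply: (eq_from_nth (x0:=0)) => // i _; apply: H.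
subst t; congr Partition; apply: eq_irrelevance.
Qed.

Lemma rw_single n j : rw (single n) j = if j == 0 then n else 0.
Proof. rewrite /rw; case: n => [|n]; case: j => [|j] //=; by rewrite nth_nil. Qed.
Lemma sz_single n : sz (single n) = (0 < n).
Proof. by case: n. Qed.

Lemma single_rw p : sz p <= 1 -> p = single (rw p 0).
Proof.
move=> h; apply/part_eq => j; rewrite rw_single; case: j => //= j.
apply/eqP; rewrite -leqn0 leqNgt rw_pos; lia.
Qed.

Lemma sz_eqP p n : (forall j, (0 < rw p j) = (j < n)) -> sz p = n.
Proof.
move=> H; apply/eqP; rewrite eqn_leq; apply/andP; split; rewrite leqNgt; apply/negP => hlt.
- by have := H n; rewrite rw_pos hlt ltnn.
- by have := H (sz p); rewrite rw_pos ltnn hlt.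
Qed.

Fixpoint aps (fuel c a : nat) : seq nat :=
  match fuel with
  | 0 => [::]
  | f.+1 => if c is 0 then [::] else c :: aps f (c - a) a
  end.

Lemma aps_ok fuel c a :
  [&& sorted geq (aps fuel c a), all (fun x => x <= c) (aps fuel c a) & all (fun x => 0 < x) (aps fuel c a)].
Proof.
elim: fuel c => [|f IH] c //=; case: c => [|c] //=.
have /and3P [H1 H2 H3] := IH (c.+1 - a).
rewrite H3 leqnn /= andbT.
rewrite (path_sortedE (leT := geq)); last by move=> x y z /= h1 h2; apply: leq_trans h2 h1.
rewrite H1 andbT; apply/andP; split.
- apply/allP => x hx; have := allP H2 x hx; lia.
- apply/allP => x hx; have := allP H2 x hx; lia.
Qed.

Lemma aps_part fuel c a : is_partition (aps fuel c a).
Proof. by have /and3P [H1 _ H3] := aps_ok fuel c a; rewrite /is_partition H1 H3. Qed.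

Definition apsp fuel c a : part := Partition (aps_part fuel c a).

Lemma rw_apsp fuel c a j : rw (apsp fuel c a) j = if j < fuel then c - j * a else 0.
Proof.
rewrite /rw /=; elim: fuel c j => [|f IH] c j //=; first by rewrite nth_nil.
case: c => [|c]; first by rewrite nth_nil; case: (j < f.+1).
case: j => [|j] //=; rewrite IH ltnS; case: (j < f) => //; lia.
Qed.


Ltac neqs := repeat match goal with
 | |- context [?a == ?a] => rewrite eqxx
 | |- context [?a == ?b] => let E := fresh "E" in
      (have E : (a == b) = false by (apply/eqP; lia));
      rewrite E; clear E
 end.
Ltac updg := rewrite /upd /=; neqs.

Notation Le i j := (YLe (YVar i) (YVar j)).
Definition Imp p q := YOr (YNot p) q.
Definition Iff p q := YAnd (Imp p q) (Imp q p).

Lemma ImpE v p q : sat v (Imp p q) <-> (sat v p -> sat v q).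
Proof. rewrite /Imp /=; split; [by case | move=> H; case: (classic (sat v p)); tauto]. Qed.
Lemma IffE v p q : sat v (Iff p q) <-> (sat v p <-> sat v q).
Proof.
rewrite /Iff /=; have := ImpE v p q; have := ImpE v q p; tauto.
Qed.

Opaque Imp Iff.
Lemma rw_K j : rw one_one j = (j < 2).
Proof. by case: j => [|[|j]] //=; rewrite /rw /= nth_nil. Qed.

Lemma K_le p : young_le one_one p <-> 1 < sz p.
Proof.
rewrite le_rw; split.
- by move/(_ 1); rewrite rw_K /= -rw_pos.
- move=> h j; rewrite rw_K; case: ltnP => // hj.
  have := rw_pos p 1; rewrite h => h1; have := rw_mono p (_ : j <= 1); lia.
Qed.

Lemma single_le m p : young_le (single m) p <-> m <= rw p 0.
Proof.
rewrite le_rw; split; first by move/(_ 0); rewrite rw_single.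
by move=> h [|j]; rewrite rw_single.
Qed.

Lemma le_of_single p q : sz p <= 1 -> (young_le p q <-> rw p 0 <= rw q 0).
Proof. by move=> /single_rw ->; rewrite single_le rw_single. Qed.

Lemma le_single p m : young_le p (single m) <-> sz p <= 1 /\ rw p 0 <= m.
Proof.
rewrite le_rw; split.
- move=> H; split; last by have := H 0; rewrite rw_single.
  have := H 1; rewrite rw_single /= leqn0 => /eqP h.
  rewrite leqNgt -rw_pos h //.
- move=> [h1 h2] [|j]; rewrite rw_single //=.
  rewrite leqn0 -[_ == _]negbK -lt0n rw_pos; apply/negP; lia.
Qed.

Definition colp n := apsp n 1 0.
Lemma rw_colp n j : rw (colp n) j = (j < n).
Proof. by rewrite /colp rw_apsp muln0 subn0; case: (j < n). Qed.
Lemma sz_colp n : sz (colp n) = n.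
Proof. by apply: sz_eqP => j; rewrite rw_colp; case: (j < n). Qed.

Lemma col_rw p : rw p 0 <= 1 -> p = colp (sz p).
Proof.
move=> h; apply/part_eq => j; rewrite rw_colp.
have := rw_pos p j; have := rw_mono p (leq0n j); case: (j < sz p); lia.
Qed.

Lemma le_of_col p q : rw p 0 <= 1 -> (young_le p q <-> sz p <= sz q).
Proof.
move=> h; split; first by case.
move=> hs; apply/le_rw => j; rewrite (col_rw h) rw_colp.
have := rw_pos q j; case: ltnP => hj //; lia.
Qed.

Lemma sz_le p q : young_le p q -> sz p <= sz q.
Proof. by case. Qed.
Lemma rw_le p q j : young_le p q -> rw p j <= rw q j.
Proof. by move/le_rw. Qed.

Definition Single x := YNot (YLe YConst (YVar x)).
Lemma SingleE v x : sat v (Single x) <-> sz (v x) <= 1.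
Proof. rewrite /Single /= K_le; split; [move=> h; lia | move=> h h'; lia]. Qed.
Opaque Single.

Definition Empty x b := YAll b (Le x b).
Lemma EmptyE v x b : x < b -> (sat v (Empty x b) <-> sz (v x) = 0).
Proof.
move=> hx; rewrite /Empty /=; split.
- move/(_ (single 0)); updg => /le_single [_ h].
  have := rw_pos (v x) 0; lia.
- move=> h p; updg; apply/le_rw => j.
  have := rw_pos (v x) j; rewrite h; lia.
Qed.

Opaque Empty.
Definition Col x b := YAll b (Imp (YAnd (Single b) (Le b x)) (YLe (YVar b) YConst)).
Lemma ColE v x b : x < b -> (sat v (Col x b) <-> rw (v x) 0 <= 1).
Proof.
move=> hx; rewrite /Col /=; setoid_rewrite ImpE; rewrite /=; setoid_rewrite SingleE; updg.
split.
- move/(_ (single (rw (v x) 0))).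
  rewrite sz_single single_le le_of_single ?sz_single ?rw_single ?rw_K //=; last by case: (rw _ _).
  by apply; split => //; case: (rw _ _).
- move=> h p [h1 h2].
  rewrite le_of_single // rw_K /=; have := rw_le 0 h2; lia.
Qed.
Opaque Col.

Opaque Imp Iff Single Empty Col.

Lemma ColS v x : sat v (Col x x.+1) <-> rw (v x) 0 <= 1.
Proof. exact: ColE. Qed.

Definition GEn p i m := [|| i == 0, m == 0 | m <= rw p i.-1].

Lemma HA y s : (forall p, sz p <= 1 /\ young_le p y -> young_le p s) <-> rw y 0 <= rw s 0.
Proof.
split.
- move=> H; apply/single_le; apply: H.
  by rewrite sz_single single_le; split => //; case: (rw _ _).
- move=> h p [h1 h2]; rewrite le_of_single //; have := rw_le 0 h2; lia.
Qed.

Lemma HB y c : (forall p, rw p 0 <= 1 /\ young_le p y -> young_le p c) <-> sz y <= sz c.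
Proof.
split.
- move=> H; have h0 : rw (colp (sz y)) 0 <= 1 by rewrite rw_colp; case: (0 < sz y).
  have := H (colp (sz y)); rewrite !(le_of_col _ h0) sz_colp leqnn; apply.
  by split.
- move=> h p [h1 h2]; rewrite le_of_col //; have := sz_le h2; lia.
Qed.

Lemma HC x I M : (forall y, rw y 0 <= M -> sz y <= I -> young_le y x) <-> GEn x I M.
Proof.
rewrite /GEn; split.
- case: I => [|I] //; case: M => [|M] //= H.
  have := H (apsp I.+1 M.+1 0); rewrite rw_apsp /= subn0 leqnn => /(_ isT).
  have hs : sz (apsp I.+1 M.+1 0) = I.+1.
    by apply: sz_eqP => j; rewrite rw_apsp muln0 subn0; case: (j < I.+1).
  rewrite hs leqnn => /(_ isT) /le_rw /(_ I); rewrite rw_apsp ltnSn muln0 subn0.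
  by [].
- move=> H y h1 h2; apply/le_rw => j.
  have hp := rw_pos y j; have hm := rw_mono y (leq0n j).
  case: (ltnP j (sz y)) => hj; last by lia.
  case/orP: H => [/eqP hI|]; first by lia.
  case/orP => [/eqP hM|hM]; first by lia.
  have := rw_mono x (_ : j <= I.-1); lia.
Qed.

Definition Ge x c s b :=
  YAll b (Imp (YAnd (YAll b.+1 (Imp (YAnd (Single b.+1) (Le b.+1 b)) (Le b.+1 s)))
                    (YAll b.+1 (Imp (YAnd (Col b.+1 b.+2) (Le b.+1 b)) (Le b.+1 c))))
              (Le b x)).

Lemma GeE v x c s b : x < b -> c < b -> s < b ->
  (sat v (Ge x c s b) <-> GEn (v x) (sz (v c)) (rw (v s) 0)).
Proof.
move=> hx hc hs; rewrite /Ge /= -HC; setoid_rewrite ImpE; rewrite /=.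
setoid_rewrite ImpE; rewrite /=; setoid_rewrite SingleE; setoid_rewrite ColS.
updg; setoid_rewrite HA; setoid_rewrite HB.
split => H y; [move=> h1 h2; exact: H | move=> [h1 h2]; exact: H].
Qed.
Opaque Ge.

Opaque Imp Iff Single Empty Col Ge.

Lemma sz_single1 n : sz (single n) <= 1. Proof. by case: n. Qed.

Definition Cover x y b :=
  YAnd (Le x y) (YAnd (YNot (Le y x)) (YAll b (Imp (Le b y) (YOr (Le b x) (Le y b))))).

Lemma CoverSE v x y b : x < b -> y < b -> sz (v y) <= 1 ->
  (sat v (Cover x y b) <-> sz (v x) <= 1 /\ rw (v y) 0 = (rw (v x) 0).+1).
Proof.
move=> hx hy h; rewrite /Cover /=; setoid_rewrite ImpE; rewrite /=; updg.
split.
- move=> [h1 [h2 h3]]; have hsx : sz (v x) <= 1 by have := sz_le h1; lia.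
  split => //; move: h1 h2; rewrite !le_of_single // => h1 h2.
  have := h3 (single (rw (v x) 0).+1); rewrite single_le !le_of_single ?sz_single ?rw_single //=.
  lia.
- move=> [h1 h2]; rewrite !le_of_single //; split; first lia; split; first lia.
  move=> p hp; have hsp : sz p <= 1 by have := sz_le hp; lia.
  move: hp; rewrite !le_of_single // => hp; lia.
Qed.

Lemma CoverCE v x y b : x < b -> y < b -> rw (v y) 0 <= 1 ->
  (sat v (Cover x y b) <-> rw (v x) 0 <= 1 /\ sz (v y) = (sz (v x)).+1).
Proof.
move=> hx hy h; rewrite /Cover /=; setoid_rewrite ImpE; rewrite /=; updg.
split.
- move=> [h1 [h2 h3]]; have hsx : rw (v x) 0 <= 1 by have := rw_le 0 h1; lia.
  split => //; move: h1 h2; rewrite !le_of_col // => h1 h2.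
  have hc : rw (colp (sz (v x)).+1) 0 <= 1 by rewrite rw_colp.
  have := h3 (colp (sz (v x)).+1); rewrite !le_of_col ?sz_colp //.
  lia.
- move=> [h1 h2]; rewrite !le_of_col //; split; first lia; split; first lia.
  move=> p hp; have hsp : rw p 0 <= 1 by have := rw_le 0 hp; lia.
  move: hp; rewrite !le_of_col // => hp; lia.
Qed.
Opaque Cover.

Definition TopIs x t b := YAll b (Imp (Single b) (Iff (Le b x) (Le b t))).
Lemma TopIsE v x t b : x < b -> t < b -> (sat v (TopIs x t b) <-> rw (v x) 0 = rw (v t) 0).
Proof.
move=> hx ht; rewrite /TopIs /=; setoid_rewrite ImpE; setoid_rewrite IffE; setoid_rewrite SingleE.
rewrite /=; updg; split.
- move=> H; have h1 := H (single (rw (v x) 0)); have h2 := H (single (rw (v t) 0)).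
  rewrite !single_le in h1 h2.
  have := h1 (sz_single1 _); have := h2 (sz_single1 _); lia.
- move=> H p hp; rewrite !le_of_single // H; tauto.
Qed.
Opaque TopIs.

Definition ValEq x c s b :=
  YAnd (Ge x c s b) (YAll b (Imp (YAnd (Single b) (Ge x c b b.+1)) (Le b s))).
Lemma ValEqE v x c s b : x < b -> c < b -> s < b ->
  (sat v (ValEq x c s b) <-> 0 < sz (v c) /\ rw (v x) (sz (v c)).-1 = rw (v s) 0).
Proof.
move=> hx hc hs; rewrite /ValEq /=; rewrite GeE //; setoid_rewrite ImpE; rewrite /=.
setoid_rewrite SingleE.
have HG : forall p, sat (upd v b p) (Ge x c b b.+1) <-> GEn (v x) (sz (v c)) (rw p 0).
  move=> p; rewrite GeE; try lia; by updg.
setoid_rewrite HG; updg; rewrite /GEn.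
split.
- move=> [H1 H2]; case: (posnP (sz (v c))) => hI.
  + have := H2 (single (rw (v s) 0).+1); rewrite hI eqxx /= le_of_single ?sz_single1 //.
    by rewrite !rw_single /=; move=> /(_ (conj isT isT)); lia.
  + have := H2 (single (rw (v x) (sz (v c)).-1)); rewrite rw_single /= leqnn !orbT.
    rewrite le_of_single ?sz_single1 // rw_single /= => /(_ (conj isT isT)).
    move: H1; have -> : (sz (v c) == 0) = false by apply/eqP; lia.
    move=> /= H1 H; split => //; move: H1; case: eqP => [e|_ /= H1]; lia.
- move=> [H1 H2]; split; first by rewrite H2 leqnn !orbT.
  move=> p [hp]; rewrite le_of_single //; have -> : (sz (v c) == 0) = false by apply/eqP; lia.
  rewrite H2 /=; case: eqP => [->|_ /=] //.
Qed.
Opaque ValEq.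

Opaque Imp Iff Single Empty Col Ge Cover TopIs ValEq.

Definition Step (R : nat -> nat -> nat -> yform) x b :=
  YAll b (YAll b.+1 (YAll b.+2 (YAll b.+3 (Imp
    (YAnd (Col b b.+4) (YAnd (YNot (Empty b b.+4)) (YAnd (Col b.+1 b.+4)
      (YAnd (Cover b b.+1 b.+4) (YAnd (Single b.+2) (YAnd (YNot (Empty b.+2 b.+4))
        (R b.+2 b.+3 b.+4)))))))
    (Iff (Ge x b b.+3 b.+4) (Ge x b.+1 b.+2 b.+4)))))).

Lemma StepE (R : nat -> nat -> nat -> yform) v x b A : x < b ->
  (forall w m, (forall j, j < b -> w j = v j) -> w b.+2 = single m ->
     (sat w (R b.+2 b.+3 b.+4) <-> w b.+3 = single (m + A))) ->
  (sat v (Step R x b) <-> forall j, rw (v x) j.+1 = rw (v x) j - A).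
Proof.
move=> hx HR; rewrite /Step /=; split.
- move=> H j.
  have hk : forall m, 0 < m -> (m + A <= rw (v x) j <-> m <= rw (v x) j.+1).
    move=> m hm.
    set w := upd (upd (upd (upd v b (colp j.+1)) b.+1 (colp j.+2)) b.+2 (single m)) b.+3 (single (m + A)).
    have := H (colp j.+1) (colp j.+2) (single m) (single (m + A)); rewrite -/w ImpE IffE.
    rewrite !GeE; try lia.
    rewrite /= ColE ?ColE ?EmptyE ?EmptyE ?SingleE; try lia.
    rewrite CoverCE; try lia; last by rewrite /w; updg; rewrite rw_colp.
    rewrite HR; first last.
    + by rewrite /w; updg.
    + by move=> i hi; rewrite /w; updg.
    rewrite /w; updg; rewrite !sz_colp !rw_colp !rw_single /= sz_single.
    rewrite /GEn /= => HH.
    have {}HH := HH ltac:(repeat split => //; try lia; try (by case: (0 < m)); by rewrite hm).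
    have e1 : (m + A == 0) = false by apply/eqP; lia.
    have e2 : (m == 0) = false by apply/eqP; lia.
    move: HH; rewrite e1 e2 /=.
    by move=> [h1 h2]; split; [move=> h; apply: h1 | move=> h; apply: h2].
  have h1 := hk (rw (v x) j.+1); have h2 := hk (rw (v x) j - A); lia.
- move=> H c c' s t; rewrite ImpE IffE !GeE; try lia.
  rewrite /= ColE ?ColE ?EmptyE ?EmptyE ?SingleE; try lia.
  updg => [[hc [hne [hc' [hcov [hs [hsne hR]]]]]]].
  move: hcov; rewrite CoverCE; try lia; last by updg.
  updg => [[_ hsz]].
  move: hR; rewrite HR; first last.
  + updg; exact: (single_rw hs).
  + by move=> i hi; updg.
  updg => ->; rewrite /GEn hsz rw_single /=.
  have -> : (sz c == 0) = false by apply/eqP; lia.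
  have -> : (rw s 0 == 0) = false.
    apply/eqP => e; apply: hsne; have := rw_pos s 0; rewrite e; lia.
  have hpos : 0 < rw s 0 by rewrite rw_pos; lia.
  have -> : (rw s 0 + A == 0) = false by apply/eqP; lia.
  have e3 : (sz c).-1.+1 = sz c by lia.
  have := H (sz c).-1; rewrite e3 /=.
  move=> ->; lia.
Qed.
Opaque Step.

Opaque Imp Iff Single Empty Col Ge Cover TopIs ValEq Step.

Definition stair T := apsp T T 1.
Lemma rw_stair T j : rw (stair T) j = T - j.
Proof. rewrite /stair rw_apsp muln1; case: ltnP => //; lia. Qed.
Lemma sz_stair T : sz (stair T) = T.
Proof. by apply: sz_eqP => j; rewrite rw_stair; lia. Qed.
Opaque stair.

Definition SuccR s t b := YAnd (Single t) (Cover s t b).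
Lemma SuccRE v s t b : s < b -> t < b ->
  (sat v (SuccR s t b) <-> sz (v s) <= 1 /\ v t = single (rw (v s) 0).+1).
Proof.
move=> hs ht; rewrite /SuccR /= SingleE; split.
- move=> [h1]; rewrite CoverSE // => [[h2 h3]]; split => //.
  by rewrite (single_rw h1) h3.
- move=> [h1 h2]; rewrite h2 sz_single1; split => //.
  by rewrite CoverSE ?h2 ?sz_single1 // rw_single.
Qed.
Opaque SuccR.

Definition StairTop x t b := YAnd (Step SuccR x b) (TopIs x t b).
Lemma StairTopE v x t b : x < b -> t < b ->
  (sat v (StairTop x t b) <-> v x = stair (rw (v t) 0)).
Proof.
move=> hx ht; rewrite /StairTop /= (@StepE _ _ _ _ 1) // ?TopIsE //; last first.
  move=> w m _ hw; rewrite SuccRE // hw sz_single1 rw_single /= addn1; split; [by case | by move=> ->].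
split.
- move=> [H1 H2]; apply/part_eq => j; rewrite rw_stair -H2.
  elim: j => [|j IH]; first lia.
  by rewrite H1 IH; lia.
- move=> ->; split => [j|]; rewrite !rw_stair; lia.
Qed.
Opaque StairTop.

Definition Add a y c b :=
  YEx b (YEx b.+1 (YEx b.+2 (YEx b.+3 (YEx b.+4
   (YAnd (SuccR a b b.+4.+1) (YAnd (SuccR y b.+1 b.+4.+1) (YAnd (SuccR c b.+2 b.+4.+1)
    (YAnd (StairTop b.+3 b.+2 b.+4.+1) (YAnd (StairTop b.+4 b.+1 b.+4.+1)
      (ValEq b.+3 b.+4 b b.+4.+1)))))))))).

Lemma AddE v a y c b A B : a < b -> y < b -> c < b -> v a = single A -> v y = single B ->
  (sat v (Add a y c b) <-> v c = single (A + B)).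
Proof.
move=> ha hy hc va vy; rewrite /Add /=; split.
- move=> [p0 [p1 [p2 [p3 [p4]]]]].
  rewrite !SuccRE ?StairTopE ?ValEqE; try lia.
  updg; rewrite va vy !rw_single /=.
  move=> [[_ e0] [[_ e1] [[hcs e2] [e3 [e4 [_ e5]]]]]].
  rewrite e4 e3 e2 e1 e0 sz_stair rw_stair !rw_single /= in e5.
  by rewrite (single_rw hcs); congr single; lia.
- move=> vc; exists (single A.+1), (single B.+1), (single (A + B).+1), (stair (A + B).+1), (stair B.+1).
  rewrite !SuccRE ?StairTopE ?ValEqE; try lia.
  updg; rewrite va vy vc !rw_single /= !sz_single1 sz_stair rw_stair.
  repeat split => //; lia.
Qed.
Opaque Add.

Definition Mul a y c b :=
  YOr (YAnd (YOr (Empty a b) (Empty y b)) (Empty c b))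
      (YAnd (YNot (Empty a b)) (YAnd (YNot (Empty y b)) (YAnd (Single c)
        (YEx b (YEx b.+1 (YAnd (Step (fun s t bb => Add s a t bb) b b.+2)
           (YAnd (TopIs b c b.+2) (YAnd (StairTop b.+1 y b.+2) (ValEq b b.+1 a b.+2))))))))).

Lemma MulE v a y c b A B : a < b -> y < b -> c < b -> v a = single A -> v y = single B ->
  (sat v (Mul a y c b) <-> v c = single (A * B)).
Proof.
move=> ha hy hc va vy; rewrite /Mul /= !EmptyE // SingleE va vy.
have z1 : forall n, sz (single n) = 0 <-> n = 0 by case.
rewrite !z1.
have HS : forall P D, sat (upd (upd v b P) b.+1 D) (Step (fun s t bb => Add s a t bb) b b.+2)
   <-> forall j, rw P j.+1 = rw P j - A.
  move=> P D; rewrite (@StepE _ _ _ _ A); try lia.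
  + by updg.
  + move=> w m hw hm.
    have h1 : w a = single A by rewrite hw; [updg | lia].
    rewrite (@AddE w b.+4 a b.+1.+4 b.+2.+4 m A ltac:(lia) ltac:(lia) ltac:(lia) hm h1).
    done.
split.
- case.
  + move=> [hAB h2].
    have hcs : sz (v c) <= 1 by lia.
    rewrite (single_rw hcs); congr single.
    have := rw_pos (v c) 0; rewrite h2 /=.
    by case: hAB => ->; rewrite ?muln0 ?mul0n; lia.
  + move=> [hA [hB [hcs [P [D []]]]]]; rewrite HS TopIsE ?StairTopE ?ValEqE; try lia.
    updg; rewrite va => H [e1 [e2 [_ e3]]]; rewrite e2 vy rw_single /= sz_stair rw_single /= in e3.
    have HP : forall j, rw P j = rw P 0 - j * A.
      by elim=> [|j IH]; [rewrite mul0n subn0 | rewrite H IH mulSn; lia].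
    rewrite HP e1 in e3; rewrite (single_rw hcs); congr single.
    have [B' eB] : exists B', B = B'.+1 by exists B.-1; lia.
    subst B; move: e3 => /=; rewrite mulnS; nia.
- move=> vc; case: (posnP A) => hA.
    by left; split; [left | rewrite vc sz_single hA].
  case: (posnP B) => hB.
    by left; split; [right | rewrite vc sz_single hB muln0].
  right; split; first lia; split; first lia; split; first by rewrite vc sz_single1.
  exists (apsp (A * B) (A * B) A), (stair B).
  rewrite HS TopIsE ?StairTopE ?ValEqE; try lia.
  updg; rewrite vc vy va !rw_single /= sz_stair.
  split.
  + move=> j; rewrite !rw_apsp; case: ltnP => h1; case: ltnP => h2; nia.
  split; first by rewrite rw_apsp; case: ltnP => //; nia.
  split => //; split => //.
  rewrite rw_apsp; case: ltnP => h; nia.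
Qed.
Opaque Mul.

Opaque Imp Iff Single Empty Col Ge Cover TopIs ValEq Step SuccR StairTop Add Mul.

Fixpoint tr (t : aterm) (r c : nat) : yform :=
  match t with
  | AVar i => YEq (YVar r) (YVar i)
  | AAdd a b => YEx c (YAnd (tr a c c.+2) (YEx c.+1 (YAnd (tr b c.+1 c.+2) (Add c c.+1 r c.+2))))
  | AMul a b => YEx c (YAnd (tr a c c.+2) (YEx c.+1 (YAnd (tr b c.+1 c.+2) (Mul c c.+1 r c.+2))))
  end.

Lemma trE t : forall r c v n, r < c ->
  (forall j, j \in aterm_fv t -> j < c /\ v j = single (n j)) ->
  (sat v (tr t r c) <-> v r = single (aterm_eval n t)).
Proof.
elim: t => [i|a IHa b IHb|a IHa b IHb] r c v n hr H /=.
- by have [_ ->] := H i (mem_head _ _).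
- have Ha : forall p, sat (upd v c p) (tr a c c.+2) <-> p = single (aterm_eval n a).
    move=> p.
    have HH : forall j, j \in aterm_fv a -> j < c.+2 /\ upd v c p j = single (n j).
      move=> j hj; have [h1 h2] := H j ltac:(by rewrite mem_cat hj).
      by split; [lia | rewrite /upd; neqs].
    by rewrite (IHa c c.+2 (upd v c p) n ltac:(lia) HH) /upd eqxx.
  have Hb : forall p q, sat (upd (upd v c p) c.+1 q) (tr b c.+1 c.+2) <-> q = single (aterm_eval n b).
    move=> p q.
    have HH : forall j, j \in aterm_fv b -> j < c.+2 /\ upd (upd v c p) c.+1 q j = single (n j).
      move=> j hj; have [h1 h2] := H j ltac:(by rewrite mem_cat hj orbT).
      by split; [lia | rewrite /upd; neqs].
    by rewrite (IHb c.+1 c.+2 (upd (upd v c p) c.+1 q) n ltac:(lia) HH) /upd eqxx.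
  split.
  + move=> [p [/Ha hp [q [/Hb hq]]]].
    rewrite (@AddE _ c c.+1 r c.+2 (aterm_eval n a) (aterm_eval n b)); try lia.
    * by rewrite /upd; neqs.
    * by rewrite /upd; neqs.
    * by rewrite /upd; neqs.
  + move=> hv; exists (single (aterm_eval n a)); split; first exact/Ha.
    exists (single (aterm_eval n b)); split; first exact/Hb.
    rewrite (@AddE _ c c.+1 r c.+2 (aterm_eval n a) (aterm_eval n b)); try lia.
    * by rewrite /upd; neqs.
    * by rewrite /upd; neqs.
    * by rewrite /upd; neqs.
- have Ha : forall p, sat (upd v c p) (tr a c c.+2) <-> p = single (aterm_eval n a).
    move=> p.
    have HH : forall j, j \in aterm_fv a -> j < c.+2 /\ upd v c p j = single (n j).
      move=> j hj; have [h1 h2] := H j ltac:(by rewrite mem_cat hj).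
      by split; [lia | rewrite /upd; neqs].
    by rewrite (IHa c c.+2 (upd v c p) n ltac:(lia) HH) /upd eqxx.
  have Hb : forall p q, sat (upd (upd v c p) c.+1 q) (tr b c.+1 c.+2) <-> q = single (aterm_eval n b).
    move=> p q.
    have HH : forall j, j \in aterm_fv b -> j < c.+2 /\ upd (upd v c p) c.+1 q j = single (n j).
      move=> j hj; have [h1 h2] := H j ltac:(by rewrite mem_cat hj orbT).
      by split; [lia | rewrite /upd; neqs].
    by rewrite (IHb c.+1 c.+2 (upd (upd v c p) c.+1 q) n ltac:(lia) HH) /upd eqxx.
  split.
  + move=> [p [/Ha hp [q [/Hb hq]]]].
    rewrite (@MulE _ c c.+1 r c.+2 (aterm_eval n a) (aterm_eval n b)); try lia.
    * by rewrite /upd; neqs.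
    * by rewrite /upd; neqs.
    * by rewrite /upd; neqs.
  + move=> hv; exists (single (aterm_eval n a)); split; first exact/Ha.
    exists (single (aterm_eval n b)); split; first exact/Hb.
    rewrite (@MulE _ c c.+1 r c.+2 (aterm_eval n a) (aterm_eval n b)); try lia.
    * by rewrite /upd; neqs.
    * by rewrite /upd; neqs.
    * by rewrite /upd; neqs.
Qed.

Opaque Imp Iff Single Empty Col Ge Cover TopIs ValEq Step SuccR StairTop Add Mul.

Definition maxv (s : seq nat) := foldr maxn 0 s.
Lemma maxv_ub s j : j \in s -> j <= maxv s.
Proof.
elim: s => //= x s IH; rewrite inE => /orP [/eqP ->|h]; first exact: leq_maxl.
by apply: leq_trans (IH h) (leq_maxr _ _).
Qed.

Fixpoint trf (f : aform) : yform :=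
  match f with
  | AEq a b => let N := (maxv (aterm_fv a ++ aterm_fv b)).+1 in
               YEx N (YAnd (tr a N N.+1) (tr b N N.+1))
  | ANot g => YNot (trf g)
  | AAnd g h => YAnd (trf g) (trf h)
  | AOr g h => YOr (trf g) (trf h)
  | AEx i g => YEx i (YAnd (Single i) (trf g))
  | AAll i g => YAll i (Imp (Single i) (trf g))
  end.

Lemma sat_ext f : forall v w, (forall i, v i = w i) -> (sat v f <-> sat w f).
Proof.
have te : forall (v w : nat -> part) t, (forall i, v i = w i) -> yterm_eval v t = yterm_eval w t.
  by move=> v w [i|] H //=.
have ue : forall (v w : nat -> part) (i : nat) (p : part), (forall j, v j = w j) -> forall j, upd v i p j = upd w i p j.
  by move=> v w i p H j; rewrite /upd; case: (j == i).
elim: f => [a b|a b|g IH|g IHg h IHh|g IHg h IHh|i g IH|i g IH] v w H /=.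
- by rewrite !(te v w).
- by rewrite !(te v w).
- by rewrite (IH v w).
- by rewrite (IHg v w) // (IHh v w).
- by rewrite (IHg v w) // (IHh v w).
- split => -[p hp]; exists p.
  + by rewrite -(IH (upd v i p) (upd w i p) (ue _ _ _ _ H)).
  + by rewrite (IH (upd v i p) (upd w i p) (ue _ _ _ _ H)).
- split => hp p.
  + by rewrite -(IH (upd v i p) (upd w i p) (ue _ _ _ _ H)).
  + by rewrite (IH (upd v i p) (upd w i p) (ue _ _ _ _ H)).
Qed.

Lemma upd_single n i m j : upd (fun k => single (n k)) i (single m) j = single (upd n i m j).
Proof. by rewrite /upd; case: (j == i). Qed.

Lemma trfE f : forall n, aform_sat n f <-> sat (fun i => single (n i)) (trf f).
Proof.
elim: f => [a b|g IH|g IHg h IHh|g IHg h IHh|i g IH|i g IH] n /=.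
- set N := (maxv _).+1.
  have HH : forall t p, (forall j, j \in aterm_fv t -> j < N) ->
      (sat (upd (fun i => single (n i)) N p) (tr t N N.+1) <-> p = single (aterm_eval n t)).
    move=> t p Ht.
    have H2 : forall j, j \in aterm_fv t -> j < N.+1 /\ upd (fun i => single (n i)) N p j = single (n j).
      by move=> j hj; have := Ht j hj => hjN; split; [lia | rewrite /upd; neqs].
    by rewrite (trE (ltnSn N) H2) /upd eqxx.
  have Ha : forall j, j \in aterm_fv a -> j < N.
    by move=> j hj; rewrite ltnS; apply: maxv_ub; rewrite mem_cat hj.
  have Hb : forall j, j \in aterm_fv b -> j < N.
    by move=> j hj; rewrite ltnS; apply: maxv_ub; rewrite mem_cat hj orbT.
  split.
  + move=> e; exists (single (aterm_eval n a)); rewrite HH // HH // e; by [].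
  + move=> [p []]; rewrite HH // HH // => -> e.
    by have := congr1 (fun q => rw q 0) e; rewrite !rw_single.
- by rewrite IH.
- by rewrite IHg IHh.
- by rewrite IHg IHh.
- split.
  + move=> [m hm]; exists (single m); split; first by rewrite SingleE /upd eqxx sz_single1.
    by rewrite (sat_ext _ (upd_single n i m)) -IH.
  + move=> [p []]; rewrite SingleE /upd eqxx => hp.
    rewrite -/(upd _ i p) (single_rw hp) (sat_ext _ (upd_single n i _)) -IH => h.
    by exists (rw p 0).
- split.
  + move=> H p; rewrite ImpE SingleE /upd eqxx => hp.
    by rewrite -/(upd _ i p) (single_rw hp) (sat_ext _ (upd_single n i _)) -IH.
  + move=> H m; have := H (single m); rewrite ImpE SingleE /upd eqxx sz_single1.
    by rewrite -/(upd _ i _) (sat_ext _ (upd_single n i m)) -IH; apply.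
Qed.

Opaque Imp Iff Single Empty Col Ge Cover TopIs ValEq Step SuccR StairTop Add Mul.

Lemma aterm_ext t n n' : (forall i, i \in aterm_fv t -> n i = n' i) ->
  aterm_eval n t = aterm_eval n' t.
Proof.
elim: t => [i|a IHa b IHb|a IHa b IHb] H /=; first by apply: H; rewrite inE.
- by rewrite IHa ?IHb // => i hi; apply: H; rewrite mem_cat hi ?orbT.
- by rewrite IHa ?IHb // => i hi; apply: H; rewrite mem_cat hi ?orbT.
Qed.

Lemma aform_ext f : forall n n', (forall i, i \in aform_fv f -> n i = n' i) ->
  (aform_sat n f <-> aform_sat n' f).
Proof.
have ue : forall (n n' : nat -> nat) i g m, (forall j, j \in [seq x <- g | x != i] -> n j = n' j) ->
    forall j, j \in g -> upd n i m j = upd n' i m j.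
  move=> n n' i g m H j hj; rewrite /upd; case: eqP => // /eqP hne.
  by apply: H; rewrite mem_filter hne.
elim: f => [a b|g IH|g IHg h IHh|g IHg h IHh|i g IH|i g IH] n n' H /=.
- by rewrite (aterm_ext (n':=n') (t:=a)) ?(aterm_ext (n':=n') (t:=b)) // => j hj;
    apply: H; rewrite mem_cat hj ?orbT.
- by rewrite (IH n n').
- rewrite (IHg n n') ?(IHh n n') // => j hj; apply: H; by rewrite mem_cat hj ?orbT.
- rewrite (IHg n n') ?(IHh n n') // => j hj; apply: H; by rewrite mem_cat hj ?orbT.
- by split => -[m hm]; exists m; move: hm; rewrite (IH (upd n i m) (upd n' i m)) //; apply: ue.
- by split => hm m; move: (hm m); rewrite (IH (upd n i m) (upd n' i m)) //; apply: ue.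
Qed.

Fixpoint closeL (js : seq nat) (f : yform) : yform :=
  match js with
  | [::] => f
  | j :: js' => YAll j (Imp (Single j) (closeL js' f))
  end.

Transparent Imp Single.
Lemma closeL_fv js f i : i \in yform_fv (closeL js f) -> (i \in yform_fv f) && (i \notin js).
Proof.
elim: js => [|j js IH] /=; first by move=> ->.
rewrite /Imp /Single /= eqxx /= mem_filter => /andP [hij /IH /andP [-> h]].
by rewrite inE (negbTE hij).
Qed.

Opaque Imp Single.
Lemma closeLE js f : forall n, sat (fun i => single (n i)) (closeL js f) <->
  forall n', (forall i, i \notin js -> n' i = n i) -> sat (fun i => single (n' i)) f.
Proof.
elim: js => [|j js IH] n /=.
- split; last by apply.
  by move=> h n' H; rewrite (sat_ext _ (v := fun i => single (n' i)) (w := fun i => single (n i))) // => i; rewrite H.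
- split.
  + move=> H n' Hn'; have := H (single (n' j)); rewrite ImpE SingleE /upd eqxx sz_single1.
    rewrite -/(upd _ j _) (sat_ext _ (upd_single n j _)) IH => /(_ isT); apply.
    move=> i hi; rewrite /upd; case: eqP => [->|/eqP hne] //.
    by apply: Hn'; rewrite inE negb_or hne.
  + move=> H p; rewrite ImpE SingleE /upd eqxx => hp.
    rewrite -/(upd _ j p) (single_rw hp) (sat_ext _ (upd_single n j _)) IH => n'' Hn''.
    apply: H => i; rewrite inE negb_or => /andP [hij hi]; rewrite Hn'' // /upd.
    by rewrite (negbTE hij).
Qed.

Theorem lemma4p2 :
  forall (k : nat) (phi : aform),
    all (fun i => i < k) (aform_fv phi) ->
    exists psi : yform,
      all (fun i => i < k) (yform_fv psi) /\
      forall n : nat -> nat,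
        aform_sat n phi <-> yform_sat (fun i => single (n i)) psi.
Proof.
move=> k phi /allP Hk.
set js := [seq i <- yform_fv (trf phi) | ~~ (i < k)].
exists (closeL js (trf phi)); split.
- apply/allP => i /closeL_fv /andP [h1 h2].
  by move: h2; rewrite mem_filter h1 andbT negbK.
- move=> n; rewrite closeLE; split.
  + move=> H n' Hn'; rewrite -trfE; apply/(aform_ext (n := n)) => // i hi.
    symmetry; apply: Hn'; rewrite mem_filter negb_and negbK Hk //.
  + by move=> H; rewrite trfE; apply: H.
Qed.
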